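(* Let $G$ be a graph on $V$ and $W\subseteq V$ reducible in $G$. Then there is an applicable combinatorial reduction strategy $(\gamma_1,\dots,\gamma_k)$ on $G$ with domain $W$ such that $\gamma_k\circ\cdots\circ\gamma_1(G)=\Gamma_W(G)$.
   Context: A graph means a finite simple graph in which loops are allowed, with adjacency matrix $A$ over $\mathbf F_2$ ($A_{vv}=1$ iff $v$ has a loop). Let $\mathcal V$ be the $\mathbf F_2$-vector space with basis $V$, $\mathcal E(x,y)=x^TAy$, $\langle W\rangle$ the span of $W$, $\langle W\rangle^{\perp\mathcal E}=\{x:\mathcal E(x,w)=0\ \forall w\in\langle W\rangle\}$. $W$ is reducible if $\langle W\rangle+\langle W\rangle^{\perp\mathcal E}=\mathcal V$; then $\mathcal E^W(x_1,x_2)=\mathcal E(x_1',x_2')$ with $x_i'\in\langle W\rangle^{\perp\mathcal E}$, $x_i-x_i'\in\langle W\rangle$, and $\Gamma_W(G)$ is the graph on $V\setminus W$ in which $v,w$ (possibly equal) are joined iff $\mathcal E^W(v,w)=1$. Combinatorial reduction rules (domain ordered first, $R$ the principal submatrix on the remaining vertices): $\mathrm{gpr}_v$ applies iff $v$ has a loop, $\begin{pmatrix}1&Q\\Q^T&R\end{pmatrix}\mapsto R-Q^TQ$; $\mathrm{gdr}_{v_1,v_2}$ applies iff $v_1,v_2$ are loopless and adjacent, $\begin{pmatrix}J&Q\\Q^T&R\end{pmatrix}\mapsto R-Q^TJQ$, $J=\begin{pmatrix}0&1\\1&0\end{pmatrix}$; $\mathrm{gnr}_v$ applies iff $v$ is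 loopless with no neighbors, $\begin{pmatrix}0&\mathbf 0\\ \mathbf 0^T&R\end{pmatrix}\mapsto R$. A combinatorial reduction strategy is a sequence $(\gamma_1,\dots,\gamma_k)$ of such rules; it is applicable to $G$ if each $\gamma_i$ applies to $\gamma_{i-1}\circ\cdots\circ\gamma_1(G)$; its domain is the set of all vertices removed. *)

(* Defs.v *)
From HB Require Import structures.
From mathcomp Require Import all_boot all_order all_algebra.
Set Implicit Arguments. Unset Strict Implicit. Unset Printing Implicit Defensive.
Import GRing.Theory.
Local Open Scope ring_scope.

(* A graph: a finite vertex set V together with an adjacency matrix over F_2
   (only entries indexed by V matter; A v v = 1 iff v has a loop). *)
Record graph (T : finType) := Graph { verts : {set T}; adj : T -> T -> 'F_2 }.

Definition sym_graph (T : finType) (G : graph T) : Prop :=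
  forall u v, u \in verts G -> v \in verts G -> adj G u v = adj G v u.

Definition graph_eq (T : finType) (G H : graph T) : Prop :=
  verts G = verts H /\
  forall u v, u \in verts G -> v \in verts G -> adj G u v = adj H u v.

(* F_2-vectors with coordinates indexed by T; the space with basis S is the set
   of vectors supported in S (this is exactly the span <S> of the basis vectors). *)
Definition vec (T : finType) := {ffun T -> 'F_2}.
Definition inspan (T : finType) (S : {set T}) (x : vec T) : bool :=
  [forall t, (t \notin S) ==> (x t == 0)].
Definition basisv (T : finType) (v : T) : vec T := [ffun t => (t == v)%:R].

Definition Eform (T : finType) (G : graph T) (x y : vec T) : 'F_2 :=
  \sum_(a : T) \sum_(b : T) x a * adj G a b * y b.

Definition perpE (T : finType) (G : graph T) (W : {set T}) (x : vec T) : bool :=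
  inspan (verts G) x && [forall w : vec T, inspan W w ==> (Eform G x w == 0)].

Definition reducible (T : finType) (G : graph T) (W : {set T}) : Prop :=
  forall z : vec T, inspan (verts G) z ->
    exists x y : vec T, [/\ inspan W x, perpE G W y & z = x + y].

Definition perp_part (T : finType) (G : graph T) (W : {set T}) (x : vec T) : vec T :=
  odflt 0 [pick x' : vec T | perpE G W x' && inspan W (x - x')].

Definition EW (T : finType) (G : graph T) (W : {set T}) (x1 x2 : vec T) : 'F_2 :=
  Eform G (perp_part G W x1) (perp_part G W x2).

Definition Gamma (T : finType) (G : graph T) (W : {set T}) : graph T :=
  Graph (verts G :\: W) (fun v w => EW G W (basisv v) (basisv w)).

Inductive rule (T : finType) :=
  | Gpr of T
  | Gdr of T & T
  | Gnr of T.

Definition rule_applies (T : finType) (G : graph T) (r : rule T) : Prop :=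
  match r with
  | Gpr v => v \in verts G /\ adj G v v = 1
  | Gdr v1 v2 => [/\ v1 \in verts G, v2 \in verts G, v1 <> v2,
                    adj G v1 v1 = 0 /\ adj G v2 v2 = 0 & adj G v1 v2 = 1]
  | Gnr v => [/\ v \in verts G, adj G v v = 0 &
               forall w, w \in verts G -> adj G v w = 0]
  end.

Definition rule_dom (T : finType) (r : rule T) : {set T} :=
  match r with
  | Gpr v => [set v]
  | Gdr v1 v2 => [set v1; v2]
  | Gnr v => [set v]
  end.

(* gpr: R - Q^T Q ; gdr: R - Q^T J Q ; gnr: R *)
Definition apply_rule (T : finType) (G : graph T) (r : rule T) : graph T :=
  match r with
  | Gpr v => Graph (verts G :\ v) (fun x y => adj G x y - adj G v x * adj G v y)
  | Gdr v1 v2 => Graph (verts G :\: [set v1; v2])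
      (fun x y => adj G x y - (adj G v1 x * adj G v2 y + adj G v2 x * adj G v1 y))
  | Gnr v => Graph (verts G :\ v) (adj G)
  end.

Fixpoint applicable (T : finType) (G : graph T) (s : seq (rule T)) : Prop :=
  match s with
  | [::] => True
  | r :: s' => rule_applies G r /\ applicable (apply_rule G r) s'
  end.

Fixpoint run (T : finType) (G : graph T) (s : seq (rule T)) : graph T :=
  match s with
  | [::] => G
  | r :: s' => run (apply_rule G r) s'
  end.

Definition strategy_dom (T : finType) (s : seq (rule T)) : {set T} :=
  \bigcup_(r <- s) rule_dom r.

(* Main.v *)
Require Import Defs.
From HB Require Import structures.
From mathcomp Require Import all_boot all_order all_algebra.
Set Implicit Arguments. Unset Strict Implicit. Unset Printing Implicit Defensive.
Import GRing.Theory.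
Local Open Scope ring_scope.

Lemma F2cases (x : 'F_2) : x = 0 \/ x = 1.
Proof. by case: x => -[|[|//]] ?; [left|right]; apply/val_inj. Qed.
Lemma F2add (x : 'F_2) : x + x = 0.
Proof. case: (F2cases x) => H; rewrite H; first by rewrite addr0. by apply/val_inj. Qed.
Lemma F2opp (x : 'F_2) : - x = x.
Proof. by apply/eqP; rewrite eq_sym -subr_eq0 opprK F2add. Qed.

Definition scalev (T : finType) (c : 'F_2) (x : {ffun T -> 'F_2}) : {ffun T -> 'F_2} :=
  [ffun t => c * x t].

Definition restr (T : finType) (D : {set T}) (x : {ffun T -> 'F_2}) : {ffun T -> 'F_2} :=
  [ffun t => if t \in D then 0 else x t].

Section Basics.
Context (T : finType).
Implicit Types (G : graph T) (x y : {ffun T -> 'F_2}) (S D W : {set T}).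

Lemma basisvE (v t : T) : basisv v t = (t == v)%:R.
Proof. by rewrite ffunE. Qed.

Lemma sum_basis_l (u : T) (F : T -> 'F_2) : \sum_a basisv u a * F a = F u.
Proof.
rewrite (bigD1 u) //= big1 => [|a /negbTE Ha]; first by rewrite basisvE eqxx mul1r addr0.
by rewrite basisvE Ha mul0r.
Qed.

Lemma sum_basis_r (u : T) (F : T -> 'F_2) : \sum_a F a * basisv u a = F u.
Proof. by rewrite -[RHS](sum_basis_l u F); apply: eq_bigr => a _; rewrite mulrC. Qed.

Lemma EformL G x y : Eform G x y = \sum_a x a * \sum_b adj G a b * y b.
Proof. rewrite /Eform; apply: eq_bigr => a _; rewrite mulr_sumr; apply: eq_bigr => b _; by rewrite mulrA. Qed.

Lemma EformR G x y : Eform G x y = \sum_b (\sum_a x a * adj G a b) * y b.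
Proof. rewrite /Eform exchange_big; apply: eq_bigr => b _; by rewrite mulr_suml. Qed.

Lemma EformDl G x x' y : Eform G (x + x') y = Eform G x y + Eform G x' y.
Proof. rewrite !EformL -big_split; apply: eq_bigr => a _; by rewrite ffunE mulrDl. Qed.
Lemma EformZl G (c : 'F_2) x y : Eform G (scalev c x) y = c * Eform G x y.
Proof. rewrite !EformL mulr_sumr; apply: eq_bigr => a _; by rewrite ffunE mulrA. Qed.
Lemma EformNl G x y : Eform G (- x) y = - Eform G x y.
Proof. rewrite !EformL -sumrN; apply: eq_bigr => a _; by rewrite ffunE mulNr. Qed.
Lemma EformBl G x x' y : Eform G (x - x') y = Eform G x y - Eform G x' y.
Proof. by rewrite EformDl EformNl. Qed.
Lemma EformDr G x y y' : Eform G x (y + y') = Eform G x y + Eform G x y'.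
Proof. rewrite !EformR -big_split; apply: eq_bigr => a _; by rewrite ffunE mulrDr. Qed.
Lemma EformNr G x y : Eform G x (- y) = - Eform G x y.
Proof. rewrite !EformR -sumrN; apply: eq_bigr => a _; by rewrite ffunE mulrN. Qed.
Lemma EformBr G x y y' : Eform G x (y - y') = Eform G x y - Eform G x y'.
Proof. by rewrite EformDr EformNr. Qed.
Lemma Eform_basis_l G a y : Eform G (basisv a) y = \sum_b adj G a b * y b.
Proof. by rewrite EformL sum_basis_l. Qed.
Lemma Eform_basis_r G x b : Eform G x (basisv b) = \sum_a x a * adj G a b.
Proof. by rewrite EformR sum_basis_r. Qed.
Lemma Eform_basis G a b : Eform G (basisv a) (basisv b) = adj G a b.
Proof. by rewrite Eform_basis_l sum_basis_r. Qed.

Lemma inspanP S x : reflect (forall t, t \notin S -> x t = 0) (inspan S x).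
Proof.
apply: (iffP forallP) => H t; first by move=> Ht; exact/eqP/(implyP (H t)).
by apply/implyP => /H ->.
Qed.
Lemma inspanD S x y : inspan S x -> inspan S y -> inspan S (x + y).
Proof. by move=> /inspanP hx /inspanP hy; apply/inspanP => t ht; rewrite ffunE hx ?hy ?addr0. Qed.
Lemma inspanN S x : inspan S x -> inspan S (- x).
Proof. by move=> /inspanP hx; apply/inspanP => t ht; rewrite ffunE hx ?oppr0. Qed.
Lemma inspanB S x y : inspan S x -> inspan S y -> inspan S (x - y).
Proof. by move=> hx hy; apply: inspanD => //; apply: inspanN. Qed.
Lemma inspanZ S (c : 'F_2) x : inspan S x -> inspan S (scalev c x).
Proof. by move=> /inspanP hx; apply/inspanP => t ht; rewrite ffunE hx ?mulr0. Qed.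
Lemma inspan0 S : inspan S 0.
Proof. by apply/inspanP => t _; rewrite ffunE. Qed.
Lemma inspanS S S' x : S \subset S' -> inspan S x -> inspan S' x.
Proof.
move=> sS /inspanP hx; apply/inspanP => t ht; apply: hx.
by apply: contra ht; apply: (subsetP sS).
Qed.
Lemma inspan_basis S v : v \in S -> inspan S (basisv v).
Proof.
move=> vS; apply/inspanP => t ht; rewrite basisvE; case: eqP => // tv.
by rewrite tv vS in ht.
Qed.

Lemma Eform_sym G x y : sym_graph G -> inspan (verts G) x -> inspan (verts G) y ->
  Eform G x y = Eform G y x.
Proof.
move=> sG /inspanP hx /inspanP hy; rewrite /Eform exchange_big.
apply: eq_bigr => a _; apply: eq_bigr => b _.
case: (boolP (b \in verts G)) => hb; last by rewrite hx // !mul0r mulr0.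
case: (boolP (a \in verts G)) => ha; last by rewrite hy // mulr0 !mul0r.
by rewrite (sG b a) // [LHS]mulrC -mulrA [adj G a b * _]mulrC.
Qed.

Lemma colsym G x v : sym_graph G -> inspan (verts G) x -> v \in verts G ->
  \sum_a x a * adj G a v = \sum_a x a * adj G v a.
Proof.
move=> sG /inspanP hx hv; apply: eq_bigr => a _.
case: (boolP (a \in verts G)) => ha; last by rewrite hx // !mul0r.
by rewrite sG.
Qed.

Lemma perpEP G W y : reflect (inspan (verts G) y /\ forall w, inspan W w -> Eform G y w = 0)
  (perpE G W y).
Proof.
apply: (iffP andP) => -[h1 h2]; split => //.
  by move=> w hw; apply/eqP; exact: (implyP (forallP h2 w)).
by apply/forallP => w; apply/implyP => /h2 ->.
Qed.

Lemma perpE_basis G D y : inspan (verts G) y ->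
  (forall d, d \in D -> Eform G y (basisv d) = 0) -> perpE G D y.
Proof.
move=> hy hd; apply/perpEP; split => // w /inspanP hw.
rewrite EformR big1 // => b _.
case: (boolP (b \in D)) => hb; last by rewrite hw ?mulr0.
by rewrite -Eform_basis_r hd // mul0r.
Qed.

Lemma perpEB G W y y' : perpE G W y -> perpE G W y' -> perpE G W (y - y').
Proof.
move=> /perpEP [h1 h2] /perpEP [h1' h2']; apply/perpEP; split; first exact: inspanB.
by move=> w hw; rewrite EformBl h2 ?h2' ?subrr.
Qed.

Lemma perpE_sub G D W y : D \subset W -> perpE G W y -> perpE G D y.
Proof.
move=> sD /perpEP [h1 h2]; apply/perpEP; split => // w hw; apply: h2.
exact: inspanS hw.
Qed.

Lemma Kzero G D u t : sym_graph G -> D \subset verts G -> reducible G D ->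
  inspan D u -> perpE G D u -> inspan (verts G) t -> Eform G u t = 0.
Proof.
move=> sG sD rD hu pu ht; have [x [z [hx pz ->]]] := rD t ht.
move/perpEP: (pu) => [_ h2]; rewrite EformDr h2 // add0r.
move/perpEP: (pz) => [hz h2z].
by rewrite Eform_sym // ?h2z //; apply: inspanS hu.
Qed.

Lemma EW_eq G W x y x2 : sym_graph G -> W \subset verts G -> reducible G W ->
  inspan (verts G) y -> perpE G W x2 -> inspan W (x - x2) -> EW G W x y = Eform G x2 y.
Proof.
move=> sG sW rW hy px2 hx2.
have [px hx] : perpE G W (perp_part G W x) /\ inspan W (x - perp_part G W x).
  rewrite /perp_part; case: pickP => [x' /andP[] //| H].
  by have := H x2; rewrite px2 hx2.
have [py hyy] : perpE G W (perp_part G W y) /\ inspan W (y - perp_part G W y).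
  rewrite /perp_part; case: pickP => [y' /andP[] //| H].
  have [a [b [ha pb ey]]] := rW y hy.
  by have := H b; rewrite pb ey addrK ha.
rewrite /EW; set x' := perp_part G W x; set y' := perp_part G W y.
have -> : y' = y - (y - y') by rewrite opprB [RHS]addrC subrK.
rewrite EformBr; move/perpEP: (px) => [_ hpx]; rewrite (hpx _ hyy) subr0.
apply/eqP; rewrite -subr_eq0 -EformBl; apply/eqP.
apply: (Kzero sG sW rW) => //; last exact: perpEB.
have -> : x' - x2 = (x - x2) - (x - x') by rewrite opprB [RHS]addrC addrA subrK.
exact: inspanB.
Qed.


Lemma restrD D x y : restr D (x + y) = restr D x + restr D y.
Proof. by apply/ffunP => t; rewrite !ffunE; case: (t \in D); rewrite ?addr0. Qed.
Lemma restrB D x y : restr D (x - y) = restr D x - restr D y.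
Proof. by apply/ffunP => t; rewrite !ffunE; case: (t \in D); rewrite ?subr0. Qed.
Lemma restr_id S D x : inspan (S :\: D) x -> restr D x = x.
Proof.
move=> /inspanP hx; apply/ffunP => t; rewrite !ffunE; case: ifP => // tD.
by rewrite hx // inE tD.
Qed.
Lemma restr_span S D x : inspan S x -> inspan (S :\: D) (restr D x).
Proof.
move=> /inspanP hx; apply/inspanP => t; rewrite inE negb_and negbK ffunE.
by case: ifP => // _ /= /hx.
Qed.
Lemma restr_diff D x : inspan D (restr D x - x).
Proof. by apply/inspanP => t tD; rewrite !ffunE (negbTE tD) subrr. Qed.

Lemma step G G' W D (p : {ffun T -> 'F_2} -> {ffun T -> 'F_2}) :
  sym_graph G -> W \subset verts G -> D \subset W ->
  verts G' = verts G :\: D ->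
  (forall x, inspan (verts G :\: D) x -> inspan D (p x - x)) ->
  (forall x, inspan (verts G :\: D) x -> perpE G D (p x)) ->
  (forall x t, inspan (verts G :\: D) x -> Eform G' x t = Eform G (p x) t) ->
  reducible G W ->
  [/\ sym_graph G', W :\: D \subset verts G', reducible G' (W :\: D) &
      graph_eq (Gamma G' (W :\: D)) (Gamma G W)].
Proof.
move=> sG sW sD vG' P1 P2 P3 rW.
have sDV : D \subset verts G by apply: subset_trans sW.
have rD : reducible G D.
  move=> z hz; exists (z - p (restr D z)), (p (restr D z)); split.
  - have -> : z - p (restr D z) = (z - restr D z) - (p (restr D z) - restr D z).
      by rewrite opprB addrA subrK.
    apply: inspanB; last by apply: P1; apply: restr_span.
    by rewrite -opprB; apply: inspanN; apply: restr_diff.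
  - by apply: P2; apply: restr_span.
  - by rewrite subrK.
have keyS : forall y, perpE G W y -> forall t, inspan (verts G) t ->
    Eform G' (restr D y) t = Eform G y t.
  move=> y py t ht; move/perpEP: (py) => [hy _].
  have hR : inspan (verts G :\: D) (restr D y) by apply: restr_span.
  rewrite P3 //.
  have -> : p (restr D y) = y + (p (restr D y) - y) by rewrite addrC subrK.
  have hu : inspan D (p (restr D y) - y).
    have -> : p (restr D y) - y = (p (restr D y) - restr D y) + (restr D y - y).
      by rewrite addrA subrK.
    by apply: inspanD; [apply: P1 | apply: restr_diff].
  have pu : perpE G D (p (restr D y) - y).
    by apply: perpEB; [apply: P2 | apply: perpE_sub py].
  by rewrite EformDl (Kzero sG sDV rD hu pu ht) addr0.
have sG' : sym_graph G'.
  move=> u v; rewrite vG' => hu hv.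
  have hbu : inspan (verts G :\: D) (basisv u) by apply: inspan_basis.
  have hbv : inspan (verts G :\: D) (basisv v) by apply: inspan_basis.
  have E1 : forall a b, a \in verts G :\: D -> b \in verts G :\: D ->
      adj G' a b = Eform G (p (basisv a)) (p (basisv b)).
    move=> a b ha hb; rewrite -Eform_basis P3; last exact: inspan_basis.
    have -> : p (basisv b) = basisv b + (p (basisv b) - basisv b) by rewrite addrC subrK.
    move/perpEP: (P2 _ (inspan_basis ha)) => [_ h2].
    by rewrite EformDr (h2 (p (basisv b) - basisv b)) ?addr0 //; apply: P1; apply: inspan_basis.
  rewrite !E1 //; apply: Eform_sym => //.
    by move/perpEP: (P2 _ hbu) => [].
  by move/perpEP: (P2 _ hbv) => [].
have sW' : W :\: D \subset verts G' by rewrite vG'; apply: setSD.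
have perpR : forall y, perpE G W y -> perpE G' (W :\: D) (restr D y).
  move=> y py; move/perpEP: (py) => [hy h2]; apply/perpEP; split.
    by rewrite vG'; apply: restr_span.
  move=> w hw; rewrite keyS //; last first.
    by apply: inspanS hw; apply: subset_trans sW; apply: subsetDl.
  by apply: h2; apply: inspanS hw; apply: subsetDl.
have rW' : reducible G' (W :\: D).
  move=> z; rewrite vG' => hz.
  have hzV : inspan (verts G) z by apply: inspanS hz; apply: subsetDl.
  have [x [y [hx py ez]]] := rW z hzV.
  exists (restr D x), (restr D y); split.
  - exact: restr_span.
  - exact: perpR.
  - by rewrite -restrD -ez (restr_id hz).
split => //; split.
  rewrite /Gamma /= vG'; apply/setP => t; rewrite !inE.
  case: (boolP (t \in D)) => tD /=; last by [].
  by rewrite (subsetP sD t tD).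
move=> u v; rewrite /Gamma /= => hu hv.
have hu' : u \in verts G :\: W by move: hu; rewrite vG' !inE; case: (u \in D).
have hv' : v \in verts G :\: W by move: hv; rewrite vG' !inE; case: (v \in D).
move: (hu') (hv'); rewrite !inE => /andP[uW uV] /andP[vW vV].
have uD : u \notin D by apply: contra uW; apply: (subsetP sD).
have [a [y [ha py ey]]] := rW (basisv u) (inspan_basis uV).
rewrite (EW_eq sG sW rW (inspan_basis vV) py); last by rewrite ey addrK.
have hv'' : inspan (verts G') (basisv v).
  by rewrite vG'; apply: inspan_basis; rewrite inE (negbTE (contra (subsetP sD v) vW)) vV.
have hu'' : inspan (W :\: D) (basisv u - restr D y).
  have -> : basisv u - restr D y = restr D a.
    rewrite -(restr_id (S := verts G) (D := D) (x := basisv u)); last first.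
      by apply: inspan_basis; rewrite inE uD.
    by rewrite -restrB ey addrK.
  exact: restr_span.
rewrite (EW_eq sG' sW' rW' hv'' (perpR _ py) hu'').
by rewrite keyS //; apply: inspan_basis.
Qed.
End Basics.

Section Rules.
Context (T : finType).
Implicit Types (G : graph T) (x y : {ffun T -> 'F_2}) (S D W : {set T}).

Lemma Eform_modif G V' (h : T -> T -> 'F_2) x (t : {ffun T -> 'F_2}) :
  Eform (Graph V' (fun a b => adj G a b - h a b)) x t =
  Eform G x t - \sum_a \sum_b x a * h a b * t b.
Proof.
rewrite /Eform /= -sumrB; apply: eq_bigr => a _; rewrite -sumrB.
by apply: eq_bigr => b _; rewrite mulrBr mulrBl.
Qed.

Lemma sum_prod x (t : {ffun T -> 'F_2}) (f g : T -> 'F_2) :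
  \sum_a \sum_b x a * (f a * g b) * t b = (\sum_a x a * f a) * (\sum_b g b * t b).
Proof.
rewrite mulr_suml; apply: eq_bigr => a _; rewrite mulr_sumr.
by apply: eq_bigr => b _; rewrite !mulrA.
Qed.

Lemma sum_prod2 x (t : {ffun T -> 'F_2}) (f g f' g' : T -> 'F_2) :
  \sum_a \sum_b x a * (f a * g b + f' a * g' b) * t b =
  (\sum_a x a * f a) * (\sum_b g b * t b) + (\sum_a x a * f' a) * (\sum_b g' b * t b).
Proof.
rewrite -!sum_prod -big_split; apply: eq_bigr => a _; rewrite -big_split.
by apply: eq_bigr => b _; rewrite mulrDr mulrDl.
Qed.

Lemma rule_props G r : sym_graph G -> rule_applies G r ->
  [/\ rule_dom r \subset verts G, verts (apply_rule G r) = verts G :\: rule_dom r &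
  exists p : {ffun T -> 'F_2} -> {ffun T -> 'F_2},
  [/\ (forall x, inspan (verts G :\: rule_dom r) x -> inspan (rule_dom r) (p x - x)),
      (forall x, inspan (verts G :\: rule_dom r) x -> perpE G (rule_dom r) (p x)) &
      (forall x t, inspan (verts G :\: rule_dom r) x ->
          Eform (apply_rule G r) x t = Eform G (p x) t)]].
Proof.
move=> sG; case: r => [v | v1 v2 | v] /=.
- move=> [hv hvv]; split => //; first by rewrite sub1set.
  exists (fun x => scalev (\sum_c x c * adj G v c) (basisv v) + x); split.
  + by move=> x _; rewrite addrK; apply: inspanZ; apply: inspan_basis; rewrite set11.
  + move=> x hx; have hxV : inspan (verts G) x by apply: inspanS hx; apply: subsetDl.
    apply: perpE_basis.
      by apply: inspanD => //; apply: inspanZ; apply: inspan_basis.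
    move=> d /set1P ->.
    rewrite EformDl EformZl Eform_basis Eform_basis_r colsym // hvv mulr1.
    by rewrite F2add.
  + move=> x t hx.
    rewrite (Eform_modif G _ (fun a b => adj G v a * adj G v b)).
    rewrite sum_prod F2opp EformDl EformZl Eform_basis_l.
    by rewrite addrC.
- move=> [hv1 hv2 hne [h11 h22] h12]; split => //.
    by apply/subsetP => d /set2P [] ->.
  exists (fun x => scalev (\sum_c x c * adj G v2 c) (basisv v1) +
                   scalev (\sum_c x c * adj G v1 c) (basisv v2) + x); split.
  + move=> x _; rewrite addrK; apply: inspanD; apply: inspanZ; apply: inspan_basis.
      by rewrite set21.
    by rewrite set22.
  + move=> x hx; have hxV : inspan (verts G) x by apply: inspanS hx; apply: subsetDl.
    apply: perpE_basis.
      by apply: inspanD => //; apply: inspanD; apply: inspanZ; apply: inspan_basis.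
    move=> d /set2P [] ->.
      rewrite !EformDl !EformZl !Eform_basis Eform_basis_r colsym // h11 (sG v2 v1) // h12.
      by rewrite mulr0 add0r mulr1 F2add.
    rewrite !EformDl !EformZl !Eform_basis Eform_basis_r colsym // h22 h12.
    by rewrite mulr0 addr0 mulr1 F2add.
  + move=> x t hx.
    rewrite (Eform_modif G _ (fun a b => adj G v1 a * adj G v2 b + adj G v2 a * adj G v1 b)).
    rewrite sum_prod2 F2opp !EformDl !EformZl !Eform_basis_l.
    by rewrite addrC [X in _ = X + _]addrC.
- move=> [hv hvv hn]; split => //; first by rewrite sub1set.
  exists id; split.
  + by move=> x _; rewrite subrr; apply: inspan0.
  + move=> x hx; have hxV : inspan (verts G) x by apply: inspanS hx; apply: subsetDl.
    apply: perpE_basis => // d /set1P ->.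
    rewrite Eform_basis_r colsym // big1 // => a _.
    case: (boolP (a \in verts G)) => ha; first by rewrite hn // mulr0.
    by move/inspanP: hxV => ->; rewrite ?mul0r.
  + by [].
Qed.

End Rules.

Section Main.
Context (T : finType).
Implicit Types (G : graph T) (S D W : {set T}).

Lemma pick_rule G W : sym_graph G -> W \subset verts G -> reducible G W -> W != set0 ->
  exists r, [/\ rule_applies G r, rule_dom r \subset W & rule_dom r != set0].
Proof.
move=> sG sW rW W0.
have sub := subsetP sW.
case: (boolP [exists w in W, adj G w w == 1]) => [/exists_inP [w wW /eqP hw] | nl].
  exists (Gpr w); split => //=; first by split => //; apply: sub.
    by rewrite sub1set.
  by apply/set0Pn; exists w; rewrite set11.
have nlW : forall w, w \in W -> adj G w w = 0.
  move=> w wW; case: (F2cases (adj G w w)) => // h.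
  by move: nl; rewrite negb_exists_in => /forall_inP /(_ w wW); rewrite h eqxx.
case: (boolP [exists w1 in W, exists w2 in W, (w1 != w2) && (adj G w1 w2 == 1)]).
  move=> /exists_inP [w1 w1W /exists_inP [w2 w2W /andP [hne /eqP h12]]].
  exists (Gdr w1 w2); split => /=.
  - split; [exact: sub | exact: sub | exact/eqP | split; exact: nlW | done].
  - by apply/subsetP => d /set2P [] ->.
  - by apply/set0Pn; exists w1; rewrite set21.
move=> ne.
have neW : forall w1 w2, w1 \in W -> w2 \in W -> adj G w1 w2 = 0.
  move=> w1 w2 h1 h2; case: (eqVneq w1 w2) => [<-|hne]; first exact: nlW.
  case: (F2cases (adj G w1 w2)) => // h.
  move: ne; rewrite negb_exists_in => /forall_inP /(_ w1 h1).
  by rewrite negb_exists_in => /forall_inP /(_ w2 h2); rewrite hne h eqxx.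
case/set0Pn: W0 => w wW.
exists (Gnr w); split => /=.
- split; [exact: sub | exact: nlW | ].
  move=> u hu; have [x [y [hx py e]]] := rW (basisv u) (inspan_basis hu).
  rewrite -Eform_basis e EformDr Eform_basis_l big1 ?add0r.
    move/perpEP: (py) => [hy h2]; rewrite Eform_sym //; first by apply: h2; apply: inspan_basis.
    by apply: inspan_basis; apply: sub.
  move=> b _; case: (boolP (b \in W)) => hb; first by rewrite neW ?mul0r.
  by move/inspanP: hx => ->; rewrite ?mulr0.
- by rewrite sub1set.
- by apply/set0Pn; exists w; rewrite set11.
Qed.

Lemma graph_eq_trans (G1 G2 G3 : graph T) : graph_eq G1 G2 -> graph_eq G2 G3 -> graph_eq G1 G3.
Proof.
move=> [e1 h1] [e2 h2]; split; first by rewrite e1.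
by move=> u v hu hv; rewrite h1 // h2 -?e1.
Qed.

Lemma base G : sym_graph G -> reducible G set0 -> graph_eq G (Gamma G set0).
Proof.
move=> sG rW; split; first by rewrite /Gamma /= setD0.
move=> u v hu hv; rewrite /Gamma /=.
rewrite (EW_eq (x2 := basisv u) sG (sub0set _) rW (inspan_basis hv)) ?Eform_basis //.
  by apply: perpE_basis; [apply: inspan_basis | move=> d; rewrite inE].
by rewrite subrr inspan0.
Qed.

Lemma main_ind n G W : (#|W| <= n)%N -> sym_graph G -> W \subset verts G -> reducible G W ->
  exists s : seq (rule T),
    [/\ applicable G s, strategy_dom s = W & graph_eq (run G s) (Gamma G W)].
Proof.
elim: n G W => [|n IH] G W hn sG sW rW;
  (case: (eqVneq W set0) => [W0|W0];
   [subst W; exists [::]; split => //; [by rewrite /strategy_dom big_nil | exact: base] |]).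
  by move: hn; rewrite leqn0 cards_eq0 (negbTE W0).
have [r [ar dW dn]] := pick_rule sG sW rW W0.
have [dV vG' [p [P1 P2 P3]]] := rule_props sG ar.
have [sG' sW' rW' ge] := step sG sW dW vG' P1 P2 P3 rW.
have hn' : (#|W :\: rule_dom r| <= n)%N.
  rewrite cardsDS // leq_subLR; apply: leq_trans hn _.
  by rewrite -add1n leq_add2r card_gt0.
have [s [ass ds gs]] := IH _ _ hn' sG' sW' rW'.
exists (r :: s); split => //=.
  rewrite /strategy_dom big_cons -/(strategy_dom s) ds.
  apply/setP => t; rewrite !inE; case: (boolP (t \in rule_dom r)) => h /=; last by [].
  by rewrite (subsetP dW t h).
exact: graph_eq_trans gs ge.
Qed.

End Main.

Theorem mainTheorem10 (T : finType) (G : graph T) (W : {set T}) :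
  sym_graph G -> W \subset verts G -> reducible G W ->
  exists s : seq (rule T),
    [/\ applicable G s, strategy_dom s = W & graph_eq (run G s) (Gamma G W)].
Proof. by move=> sG sW rW; apply: (main_ind (leqnn #|W|)). Qed.
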